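(* Let $(X,\widetilde{\tau},\mathfrak{a}_E,E)$ be a soft aura topological space. Then: (i) an arbitrary soft union of soft $\mathfrak{a}$-semi-open sets is soft $\mathfrak{a}$-semi-open; (ii) an arbitrary soft union of soft $\mathfrak{a}$-pre-open sets is soft $\mathfrak{a}$-pre-open; (iii) an arbitrary soft union of soft $\mathfrak{a}$-$\beta$-open sets is soft $\mathfrak{a}$-$\beta$-open.
   Context: Let $X$ be a nonempty set and $E$ a nonempty parameter set. A soft set over $X$ is a map $F:E\to\mathcal{P}(X)$, written $(F,E)$; $\mathrm{SS}(X,E)$ denotes all soft sets; $\sqsubseteq$ and (arbitrary) soft union $\bigsqcup$ are parameterwise inclusion and union. A soft topology $\widetilde{\tau}$ is a subfamily of $\mathrm{SS}(X,E)$ containing the soft sets with all values $\emptyset$ and all values $X$, closed under arbitrary soft unions and finite soft intersections. A soft scope function is a map $\mathfrak{a}_E:X\to\widetilde{\tau}$ with $x\in\mathfrak{a}_E(x)(e)$ for all $x\in X$, $e\in E$; $(X,\widetilde{\tau},\mathfrak{a}_E,E)$ is a soft aura topological space. $\mathrm{cl}_{\mathfrak{a}}(G,E)(e)=\{x:\mathfrak{a}_E(x)(e)\cap G(e)\neq\emptyset\}$, $\mathrm{int}_{\mathfrak{a}}(G,E)(e)=\{x:\mathfrak{a}_E(x)(e)\subseteq G(e)\}$. $(G,E)$ is soft $\mathfrak{a}$-semi-open if $(G,E)\sqsubseteq\mathrm{cl}_{\mathfrak{a}}(\mathrm{int}_{\mathfrak{a}}(G,E))$; soft $\mathfrak{a}$-pre-open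 if $(G,E)\sqsubseteq\mathrm{int}_{\mathfrak{a}}(\mathrm{cl}_{\mathfrak{a}}(G,E))$; soft $\mathfrak{a}$-$\beta$-open if $(G,E)\sqsubseteq\mathrm{cl}_{\mathfrak{a}}(\mathrm{int}_{\mathfrak{a}}(\mathrm{cl}_{\mathfrak{a}}(G,E)))$. *)

(* Defs.v *)
Definition softset (X E : Type) := E -> X -> Prop.

Definition soft_sub {X E : Type} (F G : softset X E) : Prop :=
  forall e x, F e x -> G e x.

Definition soft_null {X E : Type} : softset X E := fun _ _ => False.
Definition soft_abs {X E : Type} : softset X E := fun _ _ => True.

Definition soft_bigunion {X E I : Type} (F : I -> softset X E) : softset X E :=
  fun e x => exists i, F i e x.

Definition soft_inter {X E : Type} (F G : softset X E) : softset X E :=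
  fun e x => F e x /\ G e x.

Definition is_soft_topology {X E : Type} (tau : softset X E -> Prop) : Prop :=
  tau soft_null /\ tau soft_abs /\
  (forall (I : Type) (F : I -> softset X E),
      (forall i, tau (F i)) -> tau (soft_bigunion F)) /\
  (forall F G, tau F -> tau G -> tau (soft_inter F G)).

Definition is_soft_scope {X E : Type} (tau : softset X E -> Prop)
  (a : X -> softset X E) : Prop :=
  (forall x, tau (a x)) /\ (forall x e, a x e x).

Definition soft_acl {X E : Type} (a : X -> softset X E) (G : softset X E)
  : softset X E :=
  fun e x => exists y, a x e y /\ G e y.

Definition soft_aint {X E : Type} (a : X -> softset X E) (G : softset X E)
  : softset X E :=
  fun e x => forall y, a x e y -> G e y.

Definition soft_a_semi_open {X E : Type} (a : X -> softset X E) (G : softset X E) :=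
  soft_sub G (soft_acl a (soft_aint a G)).

Definition soft_a_pre_open {X E : Type} (a : X -> softset X E) (G : softset X E) :=
  soft_sub G (soft_aint a (soft_acl a G)).

Definition soft_a_beta_open {X E : Type} (a : X -> softset X E) (G : softset X E) :=
  soft_sub G (soft_acl a (soft_aint a (soft_acl a G))).

(* Main.v *)
Require Import Defs.

Theorem theorem4p4 (X E : Type) (x0 : X) (e0 : E)
  (tau : softset X E -> Prop) (a : X -> softset X E)
  (Htau : is_soft_topology tau) (Ha : is_soft_scope tau a) :
  (forall (I : Type) (F : I -> softset X E),
      (forall i, soft_a_semi_open a (F i)) -> soft_a_semi_open a (soft_bigunion F)) /\
  (forall (I : Type) (F : I -> softset X E),
      (forall i, soft_a_pre_open a (F i)) -> soft_a_pre_open a (soft_bigunion F)) /\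
  (forall (I : Type) (F : I -> softset X E),
      (forall i, soft_a_beta_open a (F i)) -> soft_a_beta_open a (soft_bigunion F)).
Proof.
  unfold soft_a_semi_open, soft_a_pre_open, soft_a_beta_open, soft_sub,
    soft_acl, soft_aint, soft_bigunion.
  split; [|split]; intros I F H e x [i Hi].
  - destruct (H i e x Hi) as [y [Ha1 Hy]]. exists y. split; [exact Ha1|].
    intros z Hz. exists i. exact (Hy z Hz).
  - intros y Hy. destruct (H i e x Hi y Hy) as [z [Hz1 Hz2]].
    exists z. split; [exact Hz1|]. exists i. exact Hz2.
  - destruct (H i e x Hi) as [y [Ha1 Hy]]. exists y. split; [exact Ha1|].
    intros z Hz. destruct (Hy z Hz) as [w [Hw1 Hw2]].
    exists w. split; [exact Hw1|]. exists i. exact Hw2.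
Qed.
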